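(* Let $\Gamma,\Delta$ be finite sets of formulas, $\alpha$ an atomic mapping for $\Gamma\cup\Delta$, and $\mathcal{Q}$ the quasi-simulation base for $\Gamma\cup\Delta$ and $\alpha$. Let $\Theta_{\mathsf{At}}$ be any (possibly empty) finite set of atoms, $\Sigma$ any non-empty finite set of subformulas of formulas in $\Gamma\cup\Delta$, and $\Sigma_{\mathsf{At}}=\{p^B\mid B\in\Sigma\}$. Then for every base $\mathcal{B}\supseteq\mathcal{Q}$: $\Vdash_{\mathcal{B}}\Sigma,\Theta_{\mathsf{At}}$ if and only if $\vdash_{\mathcal{B}}\ \Rightarrow\Sigma_{\mathsf{At}},\Theta_{\mathsf{At}}$.
   Context: Fix a countably infinite set $\mathsf{At}$ of atoms. Formulas are built from atoms and the constant $\bot$ using the binary connectives $\land,\lor,\to$. All contexts are finite sets (not multisets) of formulas; a comma denotes union; a subscript $\mathsf{At}$ indicates a finite set of atoms. An atomic sequent has the form $\Gamma_{\mathsf{At}} \Rightarrow \Delta_{\mathsf{At}}$. An atomic rule has finitely many (possibly zero) atomic sequents as premises and one atomic sequent as conclusion; a rule with zero premises is an atomic axiom. A base is a (possibly empty) set of atomic rules; $\mathcal{C}\supseteq\mathcal{B}$ ($\mathcal{C}$ extends $\mathcal{B}$) if $\mathcal{C}$ contains every rule of $\mathcal{B}$. Derivability $\vdash_{\mathcal{B}}$ of atomic sequents is the least relation such that: (Axiom/Weakening) if an atomic axiom with conclusion $\Gamma_{\mathsf{At}}\Rightarrow\Delta_{\mathsf{At}}$ is in $\mathcal{B}$, then $\vdash_{\mathcal{B}}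 \Theta_{\mathsf{At}},\Gamma_{\mathsf{At}}\Rightarrow\Delta_{\mathsf{At}},\Sigma_{\mathsf{At}}$ for all sets of atoms $\Theta_{\mathsf{At}},\Sigma_{\mathsf{At}}$; (Mix) if a rule with premises $\Gamma^i_{\mathsf{At}}\Rightarrow\Delta^i_{\mathsf{At}}$ ($1\le i\le n$) and conclusion $\Gamma_{\mathsf{At}}\Rightarrow\Delta_{\mathsf{At}}$ is in $\mathcal{B}$ and $\vdash_{\mathcal{B}} \Theta^i_{\mathsf{At}},\Gamma^i_{\mathsf{At}}\Rightarrow\Delta^i_{\mathsf{At}},\Sigma^i_{\mathsf{At}}$ for each $i$, then $\vdash_{\mathcal{B}} \Theta^1_{\mathsf{At}},\dots,\Theta^n_{\mathsf{At}},\Gamma_{\mathsf{At}}\Rightarrow\Delta_{\mathsf{At}},\Sigma^1_{\mathsf{At}},\dots,\Sigma^n_{\mathsf{At}}$. Support $\Vdash_{\mathcal{B}}$: (At) $\Vdash_{\mathcal{B}}\Gamma_{\mathsf{At}}$ iff $\vdash_{\mathcal{B}}\ \Rightarrow\Gamma_{\mathsf{At}}$; ($\land$) $\Vdash_{\mathcal{B}} A\land B,\Gamma$ iff $\Vdash_{\mathcal{B}}A,\Gamma$ and $\Vdash_{\mathcal{B}}B,\Gamma$; ($\lor$) $\Vdash_{\mathcal{B}}A\lor B,\Gamma$ iff $\Vdash_{\mathcal{B}}A,B,\Gamma$; ($\to$) $\Vdash_{\mathcal{B}}A\to B,\Gamma$ iff $A\Vdash_{\mathcal{B}}B,\Gamma$;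 ($\bot$) $\Vdash_{\mathcal{B}}\bot,\Gamma$ iff $\Vdash_{\mathcal{B}}\Gamma$; (Inf) for $n\ge1$, $\{A^1,\dots,A^n\}\Vdash_{\mathcal{B}}\Delta$ iff for every $\mathcal{C}\supseteq\mathcal{B}$ and all sets of atoms $\Theta^1_{\mathsf{At}},\dots,\Theta^n_{\mathsf{At}}$, if $\Vdash_{\mathcal{C}}\Theta^i_{\mathsf{At}},A^i$ for all $i$ then $\Vdash_{\mathcal{C}}\Theta^1_{\mathsf{At}},\dots,\Theta^n_{\mathsf{At}},\Delta$ (and $\varnothing\Vdash_{\mathcal{B}}\Delta$ means $\Vdash_{\mathcal{B}}\Delta$). The atomic identity rule $\mathsf{Ainit}$ is the atomic axiom $\Gamma_{\mathsf{At}},p\Rightarrow p,\Delta_{\mathsf{At}}$. $\mathcal{HS}$ is the base consisting of all instances of $\mathsf{Ainit}$. Atomic mapping: for a set of formulas $\Sigma_0$ with set of subformulas $S$, an atomic mapping is an injective function $\alpha:S\to\mathsf{At}$ with $\alpha(p)=p$ for every atom $p\in S$; write $p^A:=\alpha(A)$. The quasi-simulation base $\mathcal{Q}$ for $\Sigma_0$ and $\alpha$ consists exactly of $\mathcal{HS}$ together with the following atomic rules, for all formulas $A,B$ such that the displayed compound formula lies in $S$ (and for $p^\bot$ when $\bot\in S$), and all sets of atoms $\Gamma,\Delta,\Gamma',\Delta'$: $Q\land_1$: from $\Gamma\Rightarrow\Delta,p^{A\land B}$ infer $\Gamma\Rightarrow\Delta,p^A$; $Q\land_2$: from $\Gamma\Rightarrow\Delta,p^{A\land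 B}$ infer $\Gamma\Rightarrow\Delta,p^B$; $R\land$: from $\Gamma\Rightarrow\Delta,p^A$ and $\Gamma'\Rightarrow\Delta',p^B$ infer $\Gamma,\Gamma'\Rightarrow\Delta,\Delta',p^{A\land B}$; $Q\lor$: from $\Gamma\Rightarrow\Delta,p^{A\lor B}$ infer $\Gamma\Rightarrow\Delta,p^A,p^B$; $R\lor$: from $\Gamma\Rightarrow\Delta,p^A,p^B$ infer $\Gamma\Rightarrow\Delta,p^{A\lor B}$; $Q\to$: from $\Gamma\Rightarrow\Delta,p^{A\to B}$ and $\Gamma'\Rightarrow\Delta',p^A$ infer $\Gamma,\Gamma'\Rightarrow\Delta,\Delta',p^B$; $R\to$: from $p^A,\Gamma\Rightarrow\Delta,p^B$ infer $\Gamma\Rightarrow\Delta,p^{A\to B}$; $Q\bot$: from $\Gamma\Rightarrow\Delta,p^\bot$ infer $\Gamma\Rightarrow\Delta$. *)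

(* Defs.v *)
From HB Require Import structures.
From mathcomp Require Import all_boot.

Set Implicit Arguments.
Unset Strict Implicit.
Unset Printing Implicit Defensive.

Definition atom := nat.

Inductive form : Type :=
| Atm of atom
| Bot
| And of form & form
| Or of form & form
| Imp of form & form.

Definition form_eq_dec : comparable form.
Proof. move=> x y; rewrite /decidable; decide equality; decide equality. Defined.
HB.instance Definition _ := comparableMixin form_eq_dec.

Fixpoint subf (A : form) : seq form :=
  A :: match A with
       | Atm _ | Bot => [::]
       | And B C | Or B C | Imp B C => subf B ++ subf C
       end.

Definition subformulas (G : seq form) : seq form := flatten (map subf G).

(** Finite sets (of atoms / formulas) are represented by lists, read
    extensionally (only membership matters). *)
Definition sequent := (seq atom * seq atom)%type.

Record rule := Rule { prems : seq sequent; concl : sequent }.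

Definition base := rule -> Prop.

Definition extends (C B : base) : Prop := forall r, B r -> C r.

(** Derivability in a base: (Axiom/Weakening), (Mix), and closure under
    extensional equality of the (set-)contexts. *)
Inductive derivable (B : base) : sequent -> Prop :=
| d_ax (G D Th Si : seq atom) :
    B (Rule [::] (G, D)) -> derivable B (Th ++ G, D ++ Si)
| d_mix (r : rule) (Th Si : nat -> seq atom) :
    B r ->
    (forall i, i < size (prems r) ->
       derivable B (Th i ++ (nth ([::], [::]) (prems r) i).1,
                    (nth ([::], [::]) (prems r) i).2 ++ Si i)) ->
    derivable B (flatten [seq Th i | i <- iota 0 (size (prems r))] ++ (concl r).1,
                 (concl r).2 ++ flatten [seq Si i | i <- iota 0 (size (prems r))])
| d_set (G D G' D' : seq atom) :
    derivable B (G, D) -> G =i G' -> D =i D' -> derivable B (G', D').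

Definition compound (A : form) : bool := if A is Atm _ then false else true.

Definition atoms_of (G : seq form) : seq atom :=
  pmap (fun A => if A is Atm p then Some p else None) G.

(* size ignoring atoms; decreases along every clause of the support relation *)
Fixpoint csize (A : form) : nat :=
  match A with
  | Atm _ => 0
  | Bot => 1
  | And B C | Or B C | Imp B C => (csize B + csize C).+1
  end.

Definition msr (G : seq form) : nat := sumn (map csize G).

(* Fuel-based rendering of the clauses (At),(/\),(\/),(->),(bot),(Inf):
   the first compound formula of the context is decomposed; the context
   [Gamma] of the clause is the set with the principal formula removed. *)
Fixpoint supp (n : nat) (B : base) (G : seq form) : Prop :=
  match n with
  | 0 => False
  | n'.+1 =>
    match [seq A <- G | compound A] with
    | [::] => derivable B ([::], atoms_of G)
    | A :: _ =>
      let R := [seq X <- G | X != A] in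
      match A with
      | Atm _ => True
      | Bot => supp n' B R
      | And A1 A2 => supp n' B (A1 :: R) /\ supp n' B (A2 :: R)
      | Or A1 A2 => supp n' B (A1 :: A2 :: R)
      | Imp A1 A2 =>
          (* A1 ||-_B A2, R  via (Inf) with n = 1 *)
          forall C : base, extends C B ->
          forall Th : seq atom,
            supp n' C (map Atm Th ++ [:: A1]) ->
            supp n' C (map Atm Th ++ A2 :: R)
      end
    end
  end.

Definition supports (B : base) (G : seq form) : Prop := supp (msr G).+1 B G.

Definition atomic_mapping (S : seq form) (alpha : form -> atom) : Prop :=
  {in S &, injective alpha} /\ (forall p, Atm p \in S -> alpha (Atm p) = p).

Definition HS : base := fun r =>
  exists (G D : seq atom) (p : atom), r = Rule [::] (p :: G, p :: D).

Definition QBase (S : seq form) (alpha : form -> atom) : base := fun r =>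
  HS r \/
  exists G D G' D' : seq atom,
  (exists A B, And A B \in S /\
     (r = Rule [:: (G, D ++ [:: alpha (And A B)])] (G, D ++ [:: alpha A]) \/
      r = Rule [:: (G, D ++ [:: alpha (And A B)])] (G, D ++ [:: alpha B]) \/
      r = Rule [:: (G, D ++ [:: alpha A]); (G', D' ++ [:: alpha B])]
               (G ++ G', D ++ D' ++ [:: alpha (And A B)]))) \/
  (exists A B, Or A B \in S /\
     (r = Rule [:: (G, D ++ [:: alpha (Or A B)])] (G, D ++ [:: alpha A; alpha B]) \/
      r = Rule [:: (G, D ++ [:: alpha A; alpha B])] (G, D ++ [:: alpha (Or A B)]))) \/
  (exists A B, Imp A B \in S /\
     (r = Rule [:: (G, D ++ [:: alpha (Imp A B)]); (G', D' ++ [:: alpha A])]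
               (G ++ G', D ++ D' ++ [:: alpha B]) \/
      r = Rule [:: (alpha A :: G, D ++ [:: alpha B])] (G, D ++ [:: alpha (Imp A B)]))) \/
  (Bot \in S /\ r = Rule [:: (G, D ++ [:: alpha Bot])] (G, D)).

(* Main.v *)
Require Import Defs.
From mathcomp Require Import all_boot zify.
Set Implicit Arguments. Unset Strict Implicit.
Ltac bcase x := repeat match goal with
  | |- context [x \in ?s] => case: (x \in s)
  | |- context [x == ?y] => case: (x == y)
  end.
Ltac meq := let x := fresh "x" in intro x; rewrite ?(mem_cat, inE); bcase x; done.
Ltac msub := let x := fresh "x" in intro x; apply/implyP; rewrite ?(mem_cat, inE); bcase x; done.

Lemma catsub1 (T : eqType) (A B : seq T) : {subset A <= B} -> B ++ A =i B.
Proof. move=> H x; rewrite mem_cat; case Hx: (x \in A); last by rewrite orbF.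
by rewrite (H x Hx). Qed.
Lemma catsub2 (T : eqType) (A B : seq T) : {subset A <= B} -> A ++ B =i B.
Proof. move=> H x; rewrite mem_cat orbC -mem_cat; exact: catsub1 H x. Qed.
Lemma subcat (T : eqType) (A B C : seq T) : {subset A <= C} -> {subset B <= C} -> {subset A ++ B <= C}.
Proof. move=> HA HB x; rewrite mem_cat => /orP[/HA|/HB] //. Qed.

Lemma flat_const (T : eqType) (G : seq T) (s : seq nat) x :
  x \in flatten [seq G | i <- s] = (s != [::]) && (x \in G).
Proof. elim: s => //= i s IH; rewrite mem_cat IH; case: s {IH} => //= *; by rewrite ?orbF ?orbb. Qed.

Lemma sub_flat (T : eqType) (F : nat -> seq T) n i :
  i < n -> {subset F i <= flatten [seq F j | j <- iota 0 n]}.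
Proof.
move=> Hi x Hx; apply/flatten_mapP; exists i => //; by rewrite mem_iota.
Qed.

Lemma dweak C G D : derivable C (G, D) ->
  forall G' D' : seq atom, {subset G <= G'} -> {subset D <= D'} -> derivable C (G', D').
Proof.
move Es: (G, D) => s Hd; elim: Hd G D Es.
- move=> G0 D0 Th Si HC G D [-> ->] G' D' HG HD.
  apply: (d_set (d_ax G' D' HC)); apply: catsub1 || apply: catsub2.
  + move=> x Hx; apply: HG; by rewrite mem_cat Hx orbT.
  + move=> x Hx; apply: HD; by rewrite mem_cat Hx.
- move=> [ps [c1 c2]] Th Si HC Hp IH G D [-> ->] G' D' HG HD /=.
  case: ps HC Hp IH HG HD => [|p ps] HC Hp IH HG HD.
  + apply: (d_set (d_ax G' D' HC)); apply: catsub1 || apply: catsub2.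
    * by move=> x Hx; apply: HG.
    * by move=> x Hx; apply: HD; rewrite /= cats0.
  + have H := d_mix (Th := fun _ => G') (Si := fun _ => D') HC.
    apply: (d_set (H _)).
    * move=> i Hi; apply: (IH i Hi _ _ erefl).
      - apply: subcat => [x Hx|x Hx]; rewrite mem_cat ?Hx ?orbT //.
        apply/orP; left; apply: HG; rewrite mem_cat; apply/orP; left.
        exact: (sub_flat Hi).
      - apply: subcat => [x Hx|x Hx]; rewrite mem_cat ?Hx ?orbT //.
        apply/orP; right; apply: HD; rewrite mem_cat; apply/orP; right.
        exact: (sub_flat Hi).
    * move=> x; rewrite mem_cat flat_const /=.
      apply/orP/idP => [[//|Hx]|->]; last by left.
      apply: HG; by rewrite mem_cat Hx orbT.
    * move=> x; rewrite mem_cat flat_const /=.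
      apply/orP/idP => [[Hx|//]|->]; last by right.
      apply: HD; by rewrite mem_cat Hx.
- move=> G0 D0 G1 D1 Hd IH E1 E2 G D [-> ->] G' D' HG HD.
  apply: (IH _ _ erefl) => x Hx; [apply: HG | apply: HD]; by rewrite -?E1 -?E2.
Qed.

Lemma dmono B C s : derivable B s -> extends C B -> derivable C s.
Proof.
move=> Hd HCB; elim: Hd => [G D Th Si H|r Th Si H _ IH|G D G' D' _ IH E1 E2].
- exact: d_ax (HCB _ H).
- exact: d_mix (HCB _ H) IH.
- exact: d_set IH E1 E2.
Qed.

Lemma rule1 B p c : B (Rule [:: p] c) -> derivable B p -> derivable B c.
Proof.
move=> HR Hp; have := d_mix (Th := fun _ => [::]) (Si := fun _ => [::]) HR.
case: c {HR} => c1 c2 /=; rewrite cats0; apply => i; rewrite ltnS leqn0 => /eqP -> /=.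
by case: p Hp => p1 p2; rewrite cats0.
Qed.

Lemma rule2 B p q c : B (Rule [:: p; q] c) -> derivable B p -> derivable B q -> derivable B c.
Proof.
move=> HR Hp Hq; have := d_mix (Th := fun _ => [::]) (Si := fun _ => [::]) HR.
case: c {HR} => c1 c2 /=; rewrite cats0; apply => -[|[|i]] //= _.
  by case: p Hp => p1 p2; rewrite cats0.
by case: q Hq => p1 p2; rewrite cats0.
Qed.

Lemma axiom0 B c : B (Rule [::] c) -> derivable B c.
Proof. case: c => c1 c2 H; have := d_ax [::] [::] H; by rewrite cats0. Qed.

Lemma deduct B a G D :
  (forall G D, B (Rule [::] (a :: G, a :: D))) ->
  derivable (fun r => B r \/ r = Rule [::] ([::], [:: a])) (G, D) ->
  derivable B (a :: G, D).
Proof.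
move=> HS; move Es: (G, D) => s Hd; elim: Hd G D Es.
- move=> G0 D0 Th Si [HC|[-> ->]] G D [-> ->].
  + apply: (dweak (d_ax (a :: Th) Si HC)) => //; msub.
  + apply: (dweak (axiom0 (HS [::] [::]))) => //; msub.
- move=> r Th Si [HC|->] Hp IH G D [-> ->]; last first.
    apply: (dweak (axiom0 (HS [::] [::]))) => //=; msub.
  have H := d_mix (Th := fun i => a :: Th i) (Si := Si) HC.
  have {H} H := H (fun i Hi => IH i Hi _ _ erefl).
  apply: (dweak H) => //. apply: subcat => [x|x Hx]; last by rewrite inE mem_cat Hx !orbT.
    move/flatten_mapP => [i Hi]; rewrite inE => /orP[/eqP->|Hx]; first by rewrite inE eqxx.
    rewrite inE mem_cat; apply/orP; right; apply/orP; left.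
    by apply/flatten_mapP; exists i.
- move=> G0 D0 G1 D1 Hd IH E1 E2 G D [-> ->].
  apply: (dweak (IH _ _ erefl)) => x; rewrite ?inE -?E1 -?E2 //.
Qed.

Section Conn.
Variables (S : seq form) (alpha : form -> atom) (C : base).
Hypothesis HC : extends C (QBase S alpha).

Lemma and_eq A1 A2 R : And A1 A2 \in S ->
  derivable C ([::], alpha (And A1 A2) :: R) <->
  derivable C ([::], alpha A1 :: R) /\ derivable C ([::], alpha A2 :: R).
Proof.
move=> HS; split.
- move=> H; split.
  + apply: (dweak (rule1 (p := ([::], R ++ [:: alpha (And A1 A2)])) (c := ([::], R ++ [:: alpha A1])) _ _)) => //.
    * apply: HC; right; exists [::], R, [::], [::]; left; exists A1, A2; split=>//; left; reflexivity.
    * apply: (dweak H) => //; msub.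
    * msub.
  + apply: (dweak (rule1 (p := ([::], R ++ [:: alpha (And A1 A2)])) (c := ([::], R ++ [:: alpha A2])) _ _)) => //.
    * apply: HC; right; exists [::], R, [::], [::]; left; exists A1, A2; split=>//; right; left; reflexivity.
    * apply: (dweak H) => //; msub.
    * msub.
- move=> [H1 H2].
  apply: (dweak (rule2 (p := ([::], R ++ [:: alpha A1])) (q := ([::], R ++ [:: alpha A2])) (c := ([::] ++ [::], R ++ R ++ [:: alpha (And A1 A2)])) _ _ _)) => //.
  + apply: HC; right; exists [::], R, [::], R; left; exists A1, A2; split=>//; right; right; reflexivity.
  + apply: (dweak H1) => //; msub.
  + apply: (dweak H2) => //; msub.
  + msub.
Qed.

Lemma or_eq A1 A2 R : Or A1 A2 \in S ->
  derivable C ([::], alpha (Or A1 A2) :: R) <->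
  derivable C ([::], alpha A1 :: alpha A2 :: R).
Proof.
move=> HS; split => H.
- apply: (dweak (rule1 (p := ([::], R ++ [:: alpha (Or A1 A2)])) (c := ([::], R ++ [:: alpha A1; alpha A2])) _ _)) => //.
  + apply: HC; right; exists [::], R, [::], [::]; right; left; exists A1, A2; split=>//; left; reflexivity.
  + apply: (dweak H) => //; msub.
  + msub.
- apply: (dweak (rule1 (p := ([::], R ++ [:: alpha A1; alpha A2])) (c := ([::], R ++ [:: alpha (Or A1 A2)])) _ _)) => //.
  + apply: HC; right; exists [::], R, [::], [::]; right; left; exists A1, A2; split=>//; right; reflexivity.
  + apply: (dweak H) => //; msub.
  + msub.
Qed.

Lemma bot_eq R : Bot \in S ->
  derivable C ([::], alpha Bot :: R) <-> derivable C ([::], R).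
Proof.
move=> HS; split => H.
- apply: (dweak (rule1 (p := ([::], R ++ [:: alpha Bot])) (c := ([::], R)) _ _)) => //.
  + apply: HC; right; exists [::], R, [::], [::]; right; right; right; split=>//.
  + apply: (dweak H) => //; msub.
- apply: (dweak H) => //; msub.
Qed.

Lemma imp_eq A1 A2 R : Imp A1 A2 \in S ->
  derivable C ([::], alpha (Imp A1 A2) :: R) <->
  (forall C', extends C' C -> forall Th, derivable C' ([::], Th ++ [:: alpha A1]) ->
      derivable C' ([::], Th ++ alpha A2 :: R)).
Proof.
move=> HS; split.
- move=> H C' HC' Th H1.
  apply: (dweak (rule2 (p := ([::], R ++ [:: alpha (Imp A1 A2)])) (q := ([::], Th ++ [:: alpha A1])) (c := ([::] ++ [::], R ++ Th ++ [:: alpha A2])) _ _ _)) => //.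
  + apply: HC'; apply: HC; right; exists [::], R, [::], Th; right; right; left; exists A1, A2; split=>//; left; reflexivity.
  + apply: (dmono _ HC'); apply: (dweak H) => //; msub.
  + msub.
- move=> H.
  pose C' := fun r => C r \/ r = Rule [::] ([::], [:: alpha A1]).
  have H' := H C' (fun r h => or_introl h) [::] (axiom0 (or_intror erefl)).
  have H2 := deduct _ H'.
  apply: (dweak (rule1 (p := ([:: alpha A1], R ++ [:: alpha A2])) (c := ([::], R ++ [:: alpha (Imp A1 A2)])) _ _)) => //.
  + apply: HC; right; exists [::], R, [::], [::]; right; right; left; exists A1, A2; split=>//; right; reflexivity.
  + apply: (dweak (H2 _)); try msub.
    move=> G D; apply: HC; left; by exists G, D, (alpha A1).
  + rewrite /=; msub.
  + msub.
Qed.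
End Conn.

Definition tr (alpha : form -> atom) (X : form) : atom :=
  if X is Atm p then p else alpha X.

Lemma self_subf X : X \in subf X.
Proof. by case: X => *; rewrite /= inE eqxx. Qed.

Lemma subf_trans Y X Z : X \in subf Y -> Z \in subf X -> Z \in subf Y.
Proof.
elim: Y X => [p||A IHA B IHB|A IHA B IHB|A IHA B IHB] X /=;
  try (by rewrite inE => /eqP->);
  rewrite inE mem_cat => /orP[/eqP->//|/orP[H|H]] HZ;
  by rewrite inE mem_cat ?(IHA _ H HZ) ?(IHB _ H HZ) ?orbT.
Qed.

Lemma msr_cat G1 G2 : msr (G1 ++ G2) = msr G1 + msr G2.
Proof. by rewrite /msr map_cat sumn_cat. Qed.

Lemma msr_atm Th : msr (map Atm Th) = 0.
Proof. by elim: Th. Qed.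

Lemma msr_cons X G : msr (X :: G) = csize X + msr G.
Proof. by []. Qed.

Lemma msr_filter_le G (P : pred form) : msr (filter P G) <= msr G.
Proof. elim: G => //= X G IH; case: (P X); rewrite ?msr_cons; lia. Qed.

Lemma msr_rem A G : A \in G -> csize A + msr [seq X <- G | X != A] <= msr G.
Proof.
elim: G => //= X G IH; rewrite inE; case: (eqVneq A X) => [<-|ne] /=.
- move=> _; have := msr_filter_le G (fun X => X != A); rewrite ?eqxx msr_cons; lia.
- move=> /IH. rewrite !msr_cons; lia.
Qed.

Lemma map_rem (f : form -> atom) A G : A \in G ->
  map f G =i f A :: map f [seq X <- G | X != A].
Proof.
move=> AG y; rewrite inE; apply/mapP/orP => [[X HX ->]|[/eqP->|/mapP[X HX ->]]].
- case: (eqVneq X A) => [->|ne]; first by left.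
  by right; apply: map_f; rewrite mem_filter ne.
- by exists A.
- by exists X => //; move: HX; rewrite mem_filter => /andP[].
Qed.

Lemma atoms_eq alpha G : [seq A <- G | compound A] = [::] -> map (tr alpha) G = atoms_of G.
Proof.
elim: G => //= X G IH; case: X => //= p H; by rewrite IH.
Qed.

Lemma map_trA alpha Th : map (tr alpha) (map Atm Th) = Th.
Proof. by elim: Th => //= p Th ->. Qed.

Section Main.
Variables (L : seq form) (alpha : form -> atom).
Let S := subformulas L.
Hypothesis Hat : forall p, Atm p \in S -> alpha (Atm p) = p.

Lemma subS X Z : X \in S -> Z \in subf X -> Z \in S.
Proof.
move=> /flatten_mapP[Y HY HX] HZ; apply/flatten_mapP; exists Y => //.
exact: subf_trans HX HZ.
Qed.

Lemma trS X : X \in S -> tr alpha X = alpha X.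
Proof. by case: X => //= p /Hat ->. Qed.

Lemma subS1 A1 A2 X : X \in S ->
  (X = And A1 A2 \/ X = Or A1 A2 \/ X = Imp A1 A2) -> A1 \in S /\ A2 \in S.
Proof.
move=> XS HX; split; apply: (subS XS);
  case: HX => [->|[->|->]]; by rewrite /= inE mem_cat self_subf ?orbT.
Qed.

Lemma mainlem n : forall G C, msr G < n -> (forall X, X \in G -> compound X -> X \in S) ->
  extends C (QBase S alpha) ->
  (supp n C G <-> derivable C ([::], map (tr alpha) G)).
Proof.
elim: n => [|n IH] G C Hn HG HC; first by [].
rewrite /=; case E: [seq A <- G | compound A] => [|A rest].
  by rewrite (atoms_eq alpha E).
have : A \in [seq A <- G | compound A] by rewrite E inE eqxx.
rewrite mem_filter => /andP[cA AG].
have AS := HG A AG cA.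
have Hm := msr_rem AG.
have HR : forall X, X \in [seq X <- G | X != A] -> compound X -> X \in S.
  by move=> X; rewrite mem_filter => /andP[_ /HG].
have Heq : derivable C ([::], map (tr alpha) G) <->
   derivable C ([::], tr alpha A :: map (tr alpha) [seq X <- G | X != A]).
  by split => H; apply: (dweak H) => // x; rewrite (map_rem _ AG).
rewrite Heq; clear E Heq.
have HC2 : forall C', extends C' C -> extends C' (QBase S alpha).
  by move=> C' H r /HC /H.
move: [seq X <- G | X != A] HR Hm => R HR Hm.
clear AG HG; move: cA AS Hm.
have H1 : forall A1, A1 \in S -> forall X, X \in A1 :: R -> compound X -> X \in S.
  by move=> A1 A1S X; rewrite inE => /orP[/eqP->//|/HR].
case: A => [p||A1 A2|A1 A2|A1 A2] //= _ AS Hm.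
- rewrite IH //; last lia.
  symmetry; exact: (bot_eq HC _ AS).
- have [A1S A2S] := subS1 AS (or_introl erefl).
  rewrite !IH //= ?trS //; try (rewrite msr_cons; lia); try exact: H1.
  by symmetry; apply: (and_eq HC).
- have [A1S A2S] := subS1 AS (or_intror (or_introl erefl)).
  rewrite IH //= ?trS //; try (rewrite !msr_cons; lia).
    by symmetry; apply: (or_eq HC).
  by move=> X; rewrite !inE => /orP[/eqP->//|/orP[/eqP->//|/HR]].
- have [A1S A2S] := subS1 AS (or_intror (or_intror erefl)).
  rewrite (imp_eq HC _ AS).
  have HT : forall Th A1, A1 \in S -> forall X, X \in map Atm Th ++ A1 :: R -> compound X -> X \in S.
    move=> Th B1 B1S X; rewrite mem_cat => /orP[/mapP[p _ ->]//|].
    by rewrite inE => /orP[/eqP->//|/HR].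
  have HT1 : forall Th, forall X, X \in map Atm Th ++ [:: A1] -> compound X -> X \in S.
    move=> Th X; rewrite mem_cat => /orP[/mapP[p _ ->]//|].
    by rewrite inE => /eqP->.
  have M1 : 0 + msr [:: A1] < n.
    have -> : msr [:: A1] = csize A1 + 0 by [].
    move: Hm Hn; rewrite /=; lia.
  have M2 : 0 + msr (A2 :: R) < n.
    rewrite msr_cons; move: Hm Hn; rewrite /=; lia.
  split => H C' HC' Th.
  + move=> H2.
    have := H C' HC' Th; rewrite !IH ?msr_cat ?msr_atm /= ?map_cat ?map_trA /= ?trS //;
      try exact: M1; try exact: M2; try exact: HC2; try exact: HT; try exact: HT1.
    by apply.
  + rewrite !IH ?msr_cat ?msr_atm /= ?map_cat ?map_trA /= ?trS //;
      try exact: M1; try exact: M2; try exact: HC2; try exact: HT; try exact: HT1.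
    by apply: H.
Qed.
End Main.

Theorem lemma6 (Gam Del : seq form) (alpha : form -> atom)
  (Hmap : atomic_mapping (subformulas (Gam ++ Del)) alpha)
  (Th : seq atom) (Sig : seq form)
  (Hne : Sig != [::])
  (Hsub : {subset Sig <= subformulas (Gam ++ Del)})
  (B : base) (HB : extends B (QBase (subformulas (Gam ++ Del)) alpha)) :
  supports B (Sig ++ map Atm Th) <-> derivable B ([::], map alpha Sig ++ Th).
Proof.
have Hat := Hmap.2.
rewrite /supports (mainlem Hat) //.
- rewrite map_cat map_trA; have -> // : map (tr alpha) Sig = map alpha Sig.
  by apply/eq_in_map => X /Hsub /(trS Hat).
- by move=> X; rewrite mem_cat => /orP[/Hsub//|/mapP[p _ ->]].
Qed.
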